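(* Given $R_1>0$, there exists a unique $q\in C([0,\infty))\cap C^\infty((0,\infty))$ solution to $$\partial_{ss}q+\Big(\frac1s+\frac{3s}{R_1(1+\frac{s^2}{2R_1})}\Big)\partial_sq-\frac{q}{s^2}=-\frac{12s}{(1+\frac{s^2}{2R_1})^3},\quad s\in(0,\infty),\qquad q(0)=0,\quad\lim_{s\to\infty}q(s)=0.$$ Furthermore, $$q(s)=\frac{48R_1^3}{5s^3}+\mathrm{rem}(s),\qquad\partial_sq(s)=-\frac{144R_1^3}{5s^4}+\frac{\mathrm{rem}(s)}{s},$$ where $|\mathrm{rem}(s)|\le K[R_1]/s^4$ for $s>1$, with $K[R_1]$ a constant depending only on $R_1$. *)

(* Defs.v *)
From Stdlib Require Import Reals.
From Coquelicot Require Import Coquelicot.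
Open Scope R_scope.

Definition cont_on_nonneg (q : R -> R) : Prop :=
  (forall s, 0 < s -> continuous q s) /\
  filterlim q (at_right 0) (locally (q 0)).

Definition smooth_on_pos (q : R -> R) : Prop :=
  forall (n : nat) (s : R), 0 < s -> ex_derive (Derive_n q n) s.

Definition bvp (R1 : R) (q : R -> R) : Prop :=
  cont_on_nonneg q /\ smooth_on_pos q /\
  (forall s, 0 < s ->
     Derive_n q 2 s
     + (1 / s + 3 * s / (R1 * (1 + s ^ 2 / (2 * R1)))) * Derive q s
     - q s / s ^ 2
     = - (12 * s) / (1 + s ^ 2 / (2 * R1)) ^ 3) /\
  q 0 = 0 /\
  is_lim q p_infty 0.

(* Main.v *)
From Stdlib Require Import Reals Lra Lia.
From Coquelicot Require Import Coquelicot.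
Require Import Defs.
Open Scope R_scope.

Inductive ispoly : (R -> R) -> Prop :=
| ip_const c : ispoly (fun _ => c)
| ip_id : ispoly (fun x => x)
| ip_add f g : ispoly f -> ispoly g -> ispoly (fun x => f x + g x)
| ip_mul f g : ispoly f -> ispoly g -> ispoly (fun x => f x * g x)
| ip_ext f g : ispoly f -> (forall x, f x = g x) -> ispoly g.

Lemma is_derive_eq (f : R -> R) (x l l' : R) : is_derive f x l -> l = l' -> is_derive f x l'.
Proof. intros H ->; exact H. Qed.

Lemma ispoly_der f : ispoly f -> exists g, ispoly g /\ forall x, is_derive f x (g x).
Proof.
induction 1.
- exists (fun _ => 0); split; [constructor|]. intro x; auto_derive; auto; ring.
- exists (fun _ => 1); split; [constructor|]. intro x; auto_derive; auto; ring.
- destruct IHispoly1 as [f' [Hf Df]], IHispoly2 as [g' [Hg Dg]].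
  exists (fun x => f' x + g' x); split; [now constructor|].
  intro x; exact (@is_derive_plus R_AbsRing R_NormedModule f g x _ _ (Df x) (Dg x)).
- destruct IHispoly1 as [f' [Hf Df]], IHispoly2 as [g' [Hg Dg]].
  exists (fun x => f' x * g x + f x * g' x); split.
  + constructor; constructor; auto.
  + intro x. exact (@is_derive_mult R_AbsRing f g x _ _ (Df x) (Dg x) Rmult_comm).
- destruct IHispoly as [f' [Hf Df]]. exists f'; split; auto.
  intro x. apply (is_derive_ext f); auto.
Qed.

Definition cls (D : R -> R) (f : R -> R) := exists P k, ispoly P /\ forall x, f x = P x * (/ D x) ^ k.

Lemma cls_der (D : R -> R) (Dp : ispoly D) (Dnz : forall x, D x <> 0) f : cls D f -> exists g, cls D g /\ forall x, is_derive f x (g x).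
Proof.
intros [P [k [HP Hf]]].
destruct (ispoly_der P HP) as [P' [HP' DP]].
destruct (ispoly_der D Dp) as [D' [HD' DD]].
exists (fun x => (P' x * D x - INR k * D' x * P x) * (/ D x) ^ (S k)).
split.
- exists (fun x => P' x * D x - INR k * D' x * P x), (S k); split; auto.
  apply (ip_ext (fun x => P' x * D x + (-1) * ((INR k * D' x) * P x))).
  repeat constructor; auto. intro; ring.
- intro x. apply (is_derive_ext (fun x => P x * (/ D x) ^ k)). intro; now rewrite Hf.
  apply is_derive_eq with (P' x * (/ D x) ^ k + P x * (INR k * (- D' x / D x ^ 2) * (/ D x) ^ Init.Nat.pred k)).
  exact (@is_derive_mult R_AbsRing _ _ x _ _ (DP x) (is_derive_pow _ k x _ (is_derive_inv _ x _ (DD x) (Dnz x))) Rmult_comm).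
  specialize (Dnz x). destruct k; simpl Init.Nat.pred; [simpl; field; auto|]. rewrite S_INR. simpl. field; auto.
Qed.

Definition qf (R1 s : R) := 48 * R1 ^ 3 * s / (5 * (2 * R1 + s ^ 2) ^ 2).
Definition q1 (R1 s : R) := 48 * R1 ^ 3 * (2 * R1 - 3 * s ^ 2) / (5 * (2 * R1 + s ^ 2) ^ 3).
Definition q2 (R1 s : R) := 12 * (48 * R1 ^ 3 / 5) * s * (s ^ 2 - 2 * R1) / (2 * R1 + s ^ 2) ^ 4.

Lemma Dpos R1 s : 0 < R1 -> 0 < 2 * R1 + s ^ 2.
Proof. intros; nra. Qed.

Lemma qf_der R1 s : 0 < R1 -> is_derive (qf R1) s (q1 R1 s).
Proof.
intros H. pose proof (Dpos R1 s H). assert (E: 2*R1 + s*(s*1) <> 0) by (simpl in *; lra). assert (E2: 2*R1 + s^2 <> 0) by lra. unfold qf, q1. auto_derive.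
- repeat apply Rmult_integral_contrapositive_currified; auto; lra.
- field; auto.
Qed.

Lemma q1_der R1 s : 0 < R1 -> is_derive (q1 R1) s (q2 R1 s).
Proof.
intros H. pose proof (Dpos R1 s H). assert (E: 2*R1 + s*(s*1) <> 0) by (simpl in *; lra). assert (E2: 2*R1 + s^2 <> 0) by lra. unfold q2, q1. auto_derive.
- repeat apply Rmult_integral_contrapositive_currified; auto; lra.
- field; auto.
Qed.

Lemma Dpoly R1 : ispoly (fun x => 2 * R1 + x ^ 2).
Proof. apply (ip_ext (fun x => 2 * R1 + x * x)). repeat constructor. intro; ring. Qed.

Lemma qf_cls R1 : 0 < R1 -> forall n, cls (fun x => 2 * R1 + x ^ 2) (Derive_n (qf R1) n).
Proof.
intros H.
assert (Dp : ispoly (fun x => 2 * R1 + x ^ 2)).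
{ apply (ip_ext (fun x => 2 * R1 + x * x)). repeat constructor. intro; ring. }
assert (Dnz : forall x, 2 * R1 + x ^ 2 <> 0). { intro x; pose proof (Dpos R1 x H); lra. }
induction n as [|n IHn].
- exists (fun x => 48 * R1 ^ 3 / 5 * x), 2%nat. split.
  + repeat constructor.
  + intro x. pose proof (Dnz x) as Dx. unfold qf. simpl. simpl in Dx. field. replace (x*x) with (x*(x*1)) by ring. auto.
- destruct (cls_der _ Dp Dnz _ IHn) as [g [Hg Dg]].
  destruct Hg as [P [k [HP HPk]]]. exists P, k. split; auto.
  intro x. simpl. rewrite (is_derive_unique _ _ _ (Dg x)). apply HPk.
Qed.

Lemma qf_bvp R1 : 0 < R1 -> bvp R1 (qf R1).
Proof.
intros H.
assert (Dnz : forall x, 2 * R1 + x ^ 2 <> 0). { intro x; pose proof (Dpos R1 x H); lra. }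
assert (cont : forall s, continuous (qf R1) s).
{ intro s. apply (@ex_derive_continuous R_AbsRing R_NormedModule). eexists. apply qf_der; auto. }
split; [split|split; [|split; [|split]]].
- intros; apply cont.
- apply (filterlim_filter_le_1 (F := locally 0)). apply filter_le_within.
  apply cont.
- intros n s _. destruct (cls_der _ (Dpoly R1) Dnz _ (qf_cls R1 H n)) as [g [_ Dg]].
  eexists; apply Dg.
- intros s Hs. simpl.
  rewrite (Derive_ext _ (q1 R1)). 2:{ intro t. apply is_derive_unique, qf_der; auto. }
  rewrite (is_derive_unique _ _ _ (q1_der R1 s H)).
  rewrite (is_derive_unique _ _ _ (qf_der R1 s H)).
  unfold qf, q1, q2. specialize (Dnz s). assert (s <> 0) by lra. assert (R1 <> 0) by lra.
  assert (1 + s ^ 2 / (2 * R1) <> 0). { intro E. apply Dnz. replace (2*R1 + s^2) with (2*R1*(1 + s ^ 2 / (2 * R1))) by (field; auto). rewrite E. apply Rmult_0_r. }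
  assert (2*R1 + s*s <> 0) by (intro; apply Dnz; simpl; lra).
  field. repeat split; auto.
- unfold qf. unfold Rdiv. rewrite Rmult_0_r, Rmult_0_l. reflexivity.
- apply is_lim_le_le_loc with (f := fun _ => 0) (g := fun x => 48 * R1 ^ 3 / 5 * / x).
  + exists 1. intros x Hx. unfold qf. split.
    * apply Rmult_le_pos. apply Rmult_le_pos. nra. lra. apply Rlt_le, Rinv_0_lt_compat. nra.
    * assert (Dx : 2 * R1 + x ^ 2 <> 0) by apply Dnz.
      assert (G1 : x * x <= 2 * R1 + x ^ 2) by (simpl; lra).
      assert (G2 : 1 <= x * x) by nra.
      assert (G3 : x * x <= (2 * R1 + x ^ 2) ^ 2).
      { set (D := 2 * R1 + x ^ 2) in *. simpl. nra. }
      replace (48 * R1 ^ 3 * x / (5 * (2 * R1 + x ^ 2) ^ 2)) with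
        (48 * R1 ^ 3 / 5 * (x * / (2 * R1 + x ^ 2) ^ 2)) by (field; auto).
      apply Rmult_le_compat_l. nra.
      replace (/ x) with (x * / (x * x)) by (field; lra).
      apply Rmult_le_compat_l. lra. apply Rinv_le_contravar. nra. exact G3.
  + apply is_lim_const.
  + pose proof (is_lim_scal_l (fun y => / y) (48 * R1 ^ 3 / 5) p_infty _
      (is_lim_inv _ _ _ (is_lim_id p_infty) ltac:(discriminate))) as L.
    simpl in L. rewrite Rmult_0_r in L. exact L.
Qed.

Lemma ballR (x e y : R) : ball x e y -> Rabs (y - x) < e.
Proof. intro H; exact H. Qed.

Lemma maxp R1 f g : 0 < R1 -> bvp R1 f -> bvp R1 g -> forall s0, 0 < s0 -> f s0 - g s0 <= 0.
Proof.
intros HR [[cf0 cf1] [sf [odef [f0 limf]]]] [[cg0 cg1] [sg [odeg [g0 limg]]]] s0 Hs0.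
set (w := fun x => f x - g x).
destruct (Rle_or_lt (w s0) 0) as [H|Hv]; [exact H|]. exfalso.
set (v := w s0) in *.
assert (Df : forall x, 0 < x -> is_derive f x (Derive f x)).
{ intros x Hx. apply Derive_correct. exact (sf 0%nat x Hx). }
assert (Dg : forall x, 0 < x -> is_derive g x (Derive g x)).
{ intros x Hx. apply Derive_correct. exact (sg 0%nat x Hx). }
assert (DDf : forall x, 0 < x -> is_derive (Derive f) x (Derive (Derive f) x)).
{ intros x Hx. apply Derive_correct. exact (sf 1%nat x Hx). }
assert (DDg : forall x, 0 < x -> is_derive (Derive g) x (Derive (Derive g) x)).
{ intros x Hx. apply Derive_correct. exact (sg 1%nat x Hx). }
set (W1 := fun x => Derive f x - Derive g x).
set (W2 := fun x => Derive (Derive f) x - Derive (Derive g) x).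
assert (DW : forall x, 0 < x -> derivable_pt_lim w x (W1 x)).
{ intros x Hx. apply is_derive_Reals.
  exact (@is_derive_minus R_AbsRing R_NormedModule f g x _ _ (Df x Hx) (Dg x Hx)). }
assert (DW1 : forall x, 0 < x -> derivable_pt_lim W1 x (W2 x)).
{ intros x Hx. apply is_derive_Reals.
  exact (@is_derive_minus R_AbsRing R_NormedModule _ _ x _ _ (DDf x Hx) (DDg x Hx)). }
pose proof (is_lim_minus' _ _ _ _ _ limf limg) as L.
destruct (proj2 (is_lim_spec _ _ _) L (mkposreal v Hv)) as [M0 HM0]. simpl in HM0.
assert (hv2 : 0 < v / 2) by lra.
destruct (proj1 (filterlim_locally _ _) cf1 (mkposreal (v/2) hv2)) as [d1 Hd1].
destruct (proj1 (filterlim_locally _ _) cg1 (mkposreal (v/2) hv2)) as [d2 Hd2].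
set (e := Rmin (Rmin d1 d2) s0 / 2).
assert (He : 0 < e /\ e < d1 /\ e < d2 /\ e < s0).
{ unfold e. pose proof (cond_pos d1); pose proof (cond_pos d2).
  pose proof (Rmin_l (Rmin d1 d2) s0); pose proof (Rmin_r (Rmin d1 d2) s0); pose proof (Rmin_l d1 d2); pose proof (Rmin_r d1 d2).
  pose proof (Rmin_pos (Rmin d1 d2) s0 (Rmin_pos d1 d2 H H0) Hs0). lra. }
assert (Hwe : w e < v).
{ assert (B1 : Rabs (e - 0) < d1) by (rewrite Rminus_0_r, Rabs_pos_eq; lra).
  assert (B2 : Rabs (e - 0) < d2) by (rewrite Rminus_0_r, Rabs_pos_eq; lra).
  pose proof (ballR _ _ _ (Hd1 e B1 ltac:(lra))) as E1.
  pose proof (ballR _ _ _ (Hd2 e B2 ltac:(lra))) as E2.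
  simpl in E1, E2. rewrite f0 in E1. rewrite g0 in E2.
  apply Rabs_def2 in E1. apply Rabs_def2 in E2. unfold w. lra. }
set (M := Rmax (M0 + 1) (s0 + 1)).
assert (HM : M0 < M /\ s0 < M) by (unfold M; split; [apply Rlt_le_trans with (M0+1)|apply Rlt_le_trans with (s0+1)]; try lra; [apply Rmax_l|apply Rmax_r]).
assert (HwM : w M < v).
{ pose proof (HM0 M ltac:(lra)) as E. apply Rabs_def2 in E. unfold w. lra. }
destruct (continuity_ab_maj w e M ltac:(lra)) as [m [Hmax Hm]].
{ intros c Hc. apply continuity_pt_minus; apply continuity_pt_filterlim.
  apply cf0; lra. apply cg0; lra. }
assert (Hvm : v <= w m) by (apply Hmax; lra).
assert (Hm' : e < m < M).
{ destruct Hm as [[Hm1|Hm1] [Hm2|Hm2]]; subst; split; lra. }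
assert (mpos : 0 < m) by lra.
assert (W1m : W1 m = 0).
{ pose (pr := exist (fun l => derivable_pt_lim w m l) (W1 m) (DW m mpos) : derivable_pt w m).
  pose proof (deriv_maximum w e M m pr ltac:(lra) ltac:(lra)) as Z.
  apply Z. intros x H1 H2. apply Hmax; lra. }
assert (W2m : 0 < W2 m).
{ pose proof (odef m mpos) as E1. pose proof (odeg m mpos) as E2.
  change (Derive_n f 2 m) with (Derive (Derive f) m) in E1.
  change (Derive_n g 2 m) with (Derive (Derive g) m) in E2.
  assert (Derive f m = Derive g m) by (unfold W1 in W1m; lra).
  rewrite H in E1.
  assert (f m / m ^ 2 - g m / m ^ 2 = w m / m ^ 2) by (unfold w; field; lra).
  assert (0 < w m / m ^ 2) by (apply Rdiv_lt_0_compat; [lra| apply pow_lt; lra]).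
  unfold W2. lra. }
destruct (DW1 m mpos (W2 m) W2m) as [delta Hdelta].
set (h := Rmin (delta / 2) ((M - m) / 2)).
assert (Hh : 0 < h /\ h < delta /\ m + h <= M).
{ unfold h. pose proof (cond_pos delta).
  pose proof (Rmin_l (delta / 2) ((M - m) / 2)); pose proof (Rmin_r (delta / 2) ((M - m) / 2)).
  pose proof (Rmin_pos (delta / 2) ((M - m) / 2) ltac:(lra) ltac:(lra)). lra. }
destruct (MVT_cor2 w W1 m (m + h) ltac:(lra)) as [c [Ec Hc]].
{ intros c Hc. apply DW; lra. }
assert (W1c : 0 < W1 c).
{ assert (T1 : c - m <> 0) by lra.
  assert (T2 : Rabs (c - m) < delta) by (rewrite Rabs_pos_eq; lra).
  pose proof (Hdelta (c - m) T1 T2) as E.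
  replace (m + (c - m)) with c in E by ring. rewrite W1m in E.
  apply Rabs_def2 in E.
  assert (X : W1 c = (W1 c - 0) / (c - m) * (c - m)) by (field; auto).
  rewrite X. apply Rmult_lt_0_compat; lra. }
assert (w (m + h) <= w m) by (apply Hmax; lra).
assert (0 < W1 c * (m + h - m)) by (apply Rmult_lt_0_compat; lra).
lra.
Qed.

Lemma L1 a s : 0 < a -> 1 < s -> (2 * a * s ^ 2 + a ^ 2) * s <= (2 * a + a ^ 2) * (a + s ^ 2) ^ 2.
Proof.
intros Ha Hs.
assert (h1 : s ^ 3 <= s ^ 4) by (simpl; nra).
assert (h2 : s <= s ^ 4) by (simpl; nra).
assert (h3 : s ^ 4 <= (a + s ^ 2) ^ 2) by (simpl; nra).
assert (h4 : 0 < a ^ 2) by nra.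
replace ((2 * a * s ^ 2 + a ^ 2) * s) with (2 * a * s ^ 3 + a ^ 2 * s) by ring.
apply Rle_trans with ((2 * a + a ^ 2) * s ^ 4). nra.
apply Rmult_le_compat_l; nra.
Qed.

Lemma L2 a s : 0 < a -> 1 < s -> (10 * a * s ^ 4 + 9 * a ^ 2 * s ^ 2 + 3 * a ^ 3) * s
   <= (10 * a + 9 * a ^ 2 + 3 * a ^ 3) * (a + s ^ 2) ^ 3.
Proof.
intros Ha Hs.
assert (h0 : s ^ 3 <= s ^ 4) by (simpl; nra).
assert (h1 : s ^ 5 <= s ^ 6) by (simpl; nra).
assert (h2 : s ^ 3 <= s ^ 6) by (simpl; nra).
assert (h2' : s <= s ^ 6) by (simpl; nra).
assert (h3 : s ^ 6 <= (a + s ^ 2) ^ 3) by (simpl; nra).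
assert (h4 : 0 < a ^ 2) by nra. assert (h5 : 0 < a ^ 3) by (simpl; nra).
replace ((10 * a * s ^ 4 + 9 * a ^ 2 * s ^ 2 + 3 * a ^ 3) * s) with (10 * a * s ^ 5 + 9 * a ^ 2 * s ^ 3 + 3 * a ^ 3 * s) by ring.
apply Rle_trans with ((10 * a + 9 * a ^ 2 + 3 * a ^ 3) * s ^ 6). nra.
apply Rmult_le_compat_l; nra.
Qed.

Lemma frac_le x y b d : 0 < b -> 0 < d -> x * d <= y * b -> x / b <= y / d.
Proof. intros. replace (x / b) with ((x * d) * / (b * d)) by (field; lra).
replace (y / d) with ((y * b) * / (b * d)) by (field; lra).
apply Rmult_le_compat_r; [apply Rlt_le, Rinv_0_lt_compat; nra | auto]. Qed.

Theorem lemma3 (R1 : R) (hR1 : 0 < R1) :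
  exists q : R -> R,
    bvp R1 q /\
    (forall q' : R -> R, bvp R1 q' -> forall s, 0 <= s -> q' s = q s) /\
    (exists K : R, forall s, 1 < s ->
        Rabs (q s - 48 * R1 ^ 3 / (5 * s ^ 3)) <= K / s ^ 4 /\
        Rabs (s * (Derive q s + 144 * R1 ^ 3 / (5 * s ^ 4))) <= K / s ^ 4).
Proof.
exists (qf R1). split; [apply qf_bvp; auto|split].
- intros q' Hq' s Hs. destruct Hs as [Hs| <-].
  + pose proof (maxp _ _ _ hR1 Hq' (qf_bvp R1 hR1) s Hs).
    pose proof (maxp _ _ _ hR1 (qf_bvp R1 hR1) Hq' s Hs). lra.
  + destruct Hq' as [_ [_ [_ [H0 _]]]]. rewrite H0. unfold qf.
    unfold Rdiv. rewrite Rmult_0_r, Rmult_0_l. reflexivity.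
- set (c := 48 * R1 ^ 3 / 5). set (a := 2 * R1).
  assert (ha : 0 < a) by (unfold a; lra). assert (hc : 0 < c) by (unfold c; pose proof (pow_lt R1 3 hR1); lra).
  exists (c * (2 * a + a ^ 2) + c * (10 * a + 9 * a ^ 2 + 3 * a ^ 3)).
  intros s Hs. rewrite (is_derive_unique _ _ _ (qf_der R1 s hR1)).
  assert (hD : 0 < a + s ^ 2) by (unfold a; nra).
  assert (hs3 : 0 < s ^ 3) by (apply pow_lt; lra).
  assert (hs4 : 0 < s ^ 4) by (apply pow_lt; lra).
  assert (hA2 : 0 <= c * (10 * a + 9 * a ^ 2 + 3 * a ^ 3)) by (apply Rlt_le, Rmult_lt_0_compat; [lra|nra]).
  assert (hA1 : 0 <= c * (2 * a + a ^ 2)) by (apply Rlt_le, Rmult_lt_0_compat; [lra|nra]).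
  split.
  + assert (Eq : qf R1 s - 48 * R1 ^ 3 / (5 * s ^ 3) =
       - (c * (2 * a * s ^ 2 + a ^ 2) / (s ^ 3 * (a + s ^ 2) ^ 2))).
    { unfold qf, c, a. field. split; [|lra]. unfold a in hD; lra. }
    rewrite Eq, Rabs_Ropp, Rabs_pos_eq.
    2:{ apply Rlt_le, Rdiv_lt_0_compat. apply Rmult_lt_0_compat. lra. nra. apply Rmult_lt_0_compat; [lra|]. apply pow_lt; lra. }
    apply frac_le. apply Rmult_lt_0_compat; [lra|]. apply pow_lt; lra. lra.
    replace (c * (2 * a * s ^ 2 + a ^ 2) * s ^ 4) with (s ^ 3 * (c * ((2 * a * s ^ 2 + a ^ 2) * s))) by ring.
    replace ((c * (2 * a + a ^ 2) + c * (10 * a + 9 * a ^ 2 + 3 * a ^ 3)) * (s ^ 3 * (a + s ^ 2) ^ 2))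
      with (s ^ 3 * (c * ((2 * a + a ^ 2) * (a + s ^ 2) ^ 2) + c * (10 * a + 9 * a ^ 2 + 3 * a ^ 3) * (a + s ^ 2) ^ 2)) by ring.
    apply Rmult_le_compat_l; [lra|].
    assert (0 <= c * (10 * a + 9 * a ^ 2 + 3 * a ^ 3) * (a + s ^ 2) ^ 2) by (apply Rmult_le_pos; [lra| apply pow_le; lra]).
    assert (c * ((2 * a * s ^ 2 + a ^ 2) * s) <= c * ((2 * a + a ^ 2) * (a + s ^ 2) ^ 2)).
    { apply Rmult_le_compat_l; [lra|]. apply L1; lra. }
    lra.
  + assert (Eq : s * (q1 R1 s + 144 * R1 ^ 3 / (5 * s ^ 4)) =
       c * (10 * a * s ^ 4 + 9 * a ^ 2 * s ^ 2 + 3 * a ^ 3) / (s ^ 3 * (a + s ^ 2) ^ 3)).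
    { unfold q1, c, a. field. split; [|lra]. unfold a in hD; lra. }
    rewrite Eq, Rabs_pos_eq.
    2:{ apply Rlt_le, Rdiv_lt_0_compat. apply Rmult_lt_0_compat. lra. nra. apply Rmult_lt_0_compat; [lra|]. apply pow_lt; lra. }
    apply frac_le. apply Rmult_lt_0_compat; [lra|]. apply pow_lt; lra. lra.
    replace (c * (10 * a * s ^ 4 + 9 * a ^ 2 * s ^ 2 + 3 * a ^ 3) * s ^ 4) with (s ^ 3 * (c * ((10 * a * s ^ 4 + 9 * a ^ 2 * s ^ 2 + 3 * a ^ 3) * s))) by ring.
    replace ((c * (2 * a + a ^ 2) + c * (10 * a + 9 * a ^ 2 + 3 * a ^ 3)) * (s ^ 3 * (a + s ^ 2) ^ 3))
      with (s ^ 3 * (c * ((10 * a + 9 * a ^ 2 + 3 * a ^ 3) * (a + s ^ 2) ^ 3) + c * (2 * a + a ^ 2) * (a + s ^ 2) ^ 3)) by ring.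
    apply Rmult_le_compat_l; [lra|].
    assert (0 <= c * (2 * a + a ^ 2) * (a + s ^ 2) ^ 3) by (apply Rmult_le_pos; [lra| apply pow_le; lra]).
    assert (c * ((10 * a * s ^ 4 + 9 * a ^ 2 * s ^ 2 + 3 * a ^ 3) * s) <= c * ((10 * a + 9 * a ^ 2 + 3 * a ^ 3) * (a + s ^ 2) ^ 3)).
    { apply Rmult_le_compat_l; [lra|]. apply L2; lra. }
    lra.
Qed.
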